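(* Let $\mathfrak G_{\mathcal J}=\{a\in\mathfrak G: [a,\mathcal J]\subset\mathcal J\}$. Then the composite map $\frac1\hbar\mathcal J\hookrightarrow\frac1\hbar\mathcal D\to\mathfrak G$ is injective and its image is exactly $\mathfrak G_{\mathcal J}$; i.e. $\mathfrak G_{\mathcal J}=\frac1\hbar\mathcal J$.
   Context: Let $\Bbbk$ be a field of characteristic zero, $V$ a $2n$-dimensional $\Bbbk$-vector space with symplectic form $\omega$. Let $D$ be the universal enveloping algebra of the Heisenberg Lie algebra $V\oplus\Bbbk\hbar$ with $[x,y]=\omega(x,y)\hbar$, $[x,\hbar]=0$ for $x,y\in V$, graded with $V$ in degree 1 and $\hbar$ in degree 2, $D=\bigoplus_{i\ge0}D^i$; let $\mathcal D=\prod_{i\geq0}D^i$ and $\mathcal A=\mathcal D/\hbar\mathcal D$ (a commutative algebra of formal power series). Let $\frac1\hbar\mathcal D$ be the free rank one $\mathcal D$-submodule of $\Bbbk((\hbar))\otimes_{\Bbbk[[\hbar]]}\mathcal D$ generated by $\frac1\hbar$; it is a Lie algebra under the commutator $[a,b]=ab-ba$, and $\mathcal D$ is a Lie ideal in it. Let $\mathfrak G=\frac1\hbar\mathcal D/\frac1\hbar\Bbbk$ (quotient by the central subalgebra $\frac1\hbar D^0$); $\mathfrak G$ acts on $\mathcal D$ by $a\mapsto[a,-]$. Fix a Lagrangian subspace $\mathfrak x\subset V$ and let $\mathcal J\subset\mathcal D$ be the preimage of the ideal $\mathcal A\mathfrak x\subset\mathcal A$ under the projection $\mathcal D\to\mathcal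 A$; $\mathcal J$ is a two-sided ideal. *)

(* Defs.v *)
(* Concrete model of the completed Heisenberg enveloping
   algebra  \mathcal D  via the Moyal--Weyl star product. *)
From HB Require Import structures.
From mathcomp Require Import all_boot all_order all_algebra.
Set Implicit Arguments. Unset Strict Implicit. Unset Printing Implicit Defensive.
Import GRing.Theory.
Local Open Scope ring_scope.

Section Weyl.
Variables (K : fieldType) (N : nat).

(* exponent vectors of monomials in the coordinates e_1..e_N of V = K^N *)
Definition mon := {ffun 'I_N -> nat}.
Definition mon0 : mon := [ffun => 0%N].
Definition mon_add (a b : mon) : mon := [ffun i => (a i + b i)%N].
Definition mon_unit (i : 'I_N) : mon := [ffun j => nat_of_bool (j == i)].

(* \mathcal D = prod_i D^i : all formal series  sum_{k,g} c(k,g) hbar^k e^g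
   (each graded piece is finite dimensional, so this is the completion) *)
Definition ser := nat -> mon -> K.
(* \mathcal A = \mathcal D / hbar \mathcal D : formal power series on V *)
Definition cser := mon -> K.

Definition dser (f : ser) (i : 'I_N) : ser :=
  fun k g => ((g i).+1)%:R * f k (mon_add g (mon_unit i)).
Definition dsers (f : ser) (s : seq 'I_N) : ser := foldr (fun i h => dser h i) f s.

Definition cprod (f g : ser) : ser := fun k g0 =>
  \sum_(k1 < k.+1)
   \sum_(d : {ffun 'I_N -> 'I_((\sum_i g0 i)%N).+1} | [forall i, (d i <= g0 i)%N])
     f k1 [ffun i => nat_of_ord (d i)] * g (k - k1)%N [ffun i => (g0 i - d i)%N].

(* Moyal star product for the form omega(e_i,e_j) = W i j :
   f * g = sum_m (hbar/2)^m/m! sum_{I,J} prod_l W_{I_l J_l} d_I f d_J g,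
   so that  e_i * e_j - e_j * e_i = W i j hbar. *)
Definition star (W : 'M[K]_N) (f g : ser) : ser := fun k g0 =>
  \sum_(m < k.+1) ((2 ^ m * m`!)%N%:R)^-1 *
    \sum_(I : m.-tuple 'I_N) \sum_(J : m.-tuple 'I_N)
      (\prod_(l < m) W (tnth I l) (tnth J l)) *
        cprod (dsers f I) (dsers g J) (k - m)%N g0.

Definition cst (c : K) : ser := fun k g => if (k == 0%N) && (g == mon0) then c else 0.
Definition hbar : ser := fun k g => if (k == 1%N) && (g == mon0) then 1 else 0.
Definition sub_ser (f g : ser) : ser := fun k m => f k m - g k m.

Definition proj (f : ser) : cser := fun g => f 0%N g.
Definition amul (f g : cser) : cser := fun g0 =>
  \sum_(d : {ffun 'I_N -> 'I_((\sum_i g0 i)%N).+1} | [forall i, (d i <= g0 i)%N])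
     f [ffun i => nat_of_ord (d i)] * g [ffun i => (g0 i - d i)%N].
Definition alin (v : 'rV[K]_N) : cser := fun g => \sum_i v 0 i * (g == mon_unit i)%:R.

(* the ideal A x of A generated by the row space x of X *)
Definition in_Ax (m : nat) (X : 'M[K]_(m, N)) (p : cser) : Prop :=
  exists f : 'I_m -> cser, p = (fun g => \sum_r amul (f r) (alin (row r X)) g).
(* \mathcal J = preimage of A x under D -> A *)
Definition inJ (m : nat) (X : 'M[K]_(m, N)) (a : ser) : Prop := in_Ax X (proj a).

(* An element a/hbar of (1/hbar) D is represented by a in D.  Two such
   represent the same element of G = (1/hbar)D/(1/hbar)K iff they differ by
   a constant. *)
Definition G_rel (a b : ser) : Prop := exists c : K, a = (fun k g => b k g + cst c k g).

(* [a/hbar] lies in G_J : [a/hbar, b] = (a*b - b*a)/hbar lies in J for all b in J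
   (D is hbar-torsion free, so  (a*b-b*a)/hbar = d  iff  hbar*d = a*b-b*a). *)
Definition in_GJ (W : 'M[K]_N) (m : nat) (X : 'M[K]_(m, N)) (a : ser) : Prop :=
  forall b, inJ X b ->
    exists d, inJ X d /\ star W hbar d = sub_ser (star W a b) (star W b a).

End Weyl.

(* Main.v *)
Require Import Defs.
From HB Require Import structures.
From mathcomp Require Import all_boot all_order all_algebra.
From mathcomp Require Import ring.
From Stdlib Require Import FunctionalExtensionality.
Set Implicit Arguments. Unset Strict Implicit. Unset Printing Implicit Defensive.
Import GRing.Theory.
Local Open Scope ring_scope.

Lemma sum4_swap (R : nmodType) (A B C D : finType) (T : A -> B -> C -> D -> R) :
  \sum_a \sum_b \sum_c \sum_d T a b c d = \sum_c \sum_d \sum_a \sum_b T a b c d.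
Proof.
transitivity (\sum_a \sum_c \sum_b \sum_d T a b c d).
  by apply: eq_bigr => a _; rewrite exchange_big.
transitivity (\sum_a \sum_c \sum_d \sum_b T a b c d).
  by apply: eq_bigr => a _; apply: eq_bigr => c _; rewrite exchange_big.
rewrite exchange_big; apply: eq_bigr => c _; by rewrite exchange_big.
Qed.

Lemma quad_sum (K : fieldType) (N m : nat) (W : 'M[K]_N) (X : 'M[K]_(m, N)) (a : 'I_m -> 'I_m -> K) :
  \sum_i \sum_j W i j * (\sum_s \sum_r X s i * X r j * a s r) =
  \sum_s \sum_r (X *m W *m X^T) s r * a s r.
Proof.
transitivity (\sum_i \sum_j \sum_s \sum_r X s i * W i j * X r j * a s r).
  apply: eq_bigr => i _; apply: eq_bigr => j _; rewrite mulr_sumr; apply: eq_bigr => s _.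
  rewrite mulr_sumr; apply: eq_bigr => r _.
  by rewrite !mulrA [W i j * X s i]mulrC -!mulrA [W i j * _]mulrCA.
rewrite sum4_swap; apply: eq_bigr => s _; apply: eq_bigr => r _.
rewrite !mxE [RHS]mulr_suml [LHS]exchange_big; apply: eq_bigr => j _.
rewrite !mxE !mulr_suml; apply: eq_bigr => i _; done.
Qed.

Section Ser.
Variables (K : fieldType) (N : nat).
Local Notation mon := (mon N).
Local Notation cser := (cser K N).
Implicit Types (g : mon) (i j : 'I_N) (f h p q : cser) (v : 'rV[K]_N).

Definition mv B (d : {ffun 'I_N -> 'I_B}) : mon := [ffun i => nat_of_ord (d i)].
Definition msub (g d : mon) : mon := [ffun i => (g i - d i)%N].
Definition mle (d g : mon) := [forall i, d i <= g i]%N.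

Lemma mleP (d g : mon) : reflect (forall i, d i <= g i)%N (mle d g).
Proof. exact: forallP. Qed.

Lemma amulE (f h : cser) (g : mon) : amul f h g =
  \sum_(d : {ffun 'I_N -> 'I_(\sum_i g i).+1} | mle (mv d) g) f (mv d) * h (msub g (mv d)).
Proof.
apply: eq_big => [d|d _]; first by apply: eq_forallb => i; rewrite ffunE.
by congr (_ * h _); apply/ffunP => i; rewrite !ffunE.
Qed.

Lemma sum_bound B1 B2 (g : mon) (F : mon -> K) : (forall i, g i <= B1)%N -> (forall i, g i <= B2)%N ->
 \sum_(d : {ffun 'I_N -> 'I_B1.+1} | mle (mv d) g) F (mv d) =
 \sum_(d : {ffun 'I_N -> 'I_B2.+1} | mle (mv d) g) F (mv d).
Proof.
move=> h1 h2.
pose h (d : {ffun 'I_N -> 'I_B2.+1}) : {ffun 'I_N -> 'I_B1.+1} := [ffun i => inord (d i)].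
pose h' (d : {ffun 'I_N -> 'I_B1.+1}) : {ffun 'I_N -> 'I_B2.+1} := [ffun i => inord (d i)].
have hv d : mle (mv d) g -> mv (h d) = mv d.
  move/mleP=> Hd; apply/ffunP=> i; rewrite !ffunE inordK //.
  by move: (Hd i); rewrite ffunE => Hi; apply: leq_ltn_trans Hi _; rewrite ltnS.
have hv' d : mle (mv d) g -> mv (h' d) = mv d.
  move/mleP=> Hd; apply/ffunP=> i; rewrite !ffunE inordK //.
  by move: (Hd i); rewrite ffunE => Hi; apply: leq_ltn_trans Hi _; rewrite ltnS.
have mvinj B (d1 d2 : {ffun 'I_N -> 'I_B}) : mv d1 = mv d2 -> d1 = d2.
  move=> E; apply/ffunP=> i; apply: val_inj; move/ffunP: E => /(_ i).
  by rewrite !ffunE.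
have eqP' d : (mle (mv (h d)) g && (h' (h d) == d)) = mle (mv d) g.
  apply/idP/idP.
    case/andP=> Phd /eqP E.
    by rewrite -E (hv' _ Phd).
  move=> Pd; rewrite (hv _ Pd) Pd /=; apply/eqP/mvinj.
  by rewrite hv' (hv _ Pd).
rewrite (reindex_onto h h').
  apply: eq_big => [d|d]; first exact: eqP'.
  by rewrite eqP' => Pd; rewrite hv.
by move=> d Pd; apply: mvinj; rewrite hv ?hv' // hv'.
Qed.

Lemma le_deg (g : mon) i : (g i <= \sum_j g j)%N.
Proof. by rewrite (bigD1 i) //= leq_addr. Qed.

Lemma mvinj B (d1 d2 : {ffun 'I_N -> 'I_B}) : mv d1 = mv d2 -> d1 = d2.
Proof.
move=> E; apply/ffunP=> i; apply: val_inj; move/ffunP: E => /(_ i).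
by rewrite !ffunE.
Qed.

Lemma sum_flip B (g : mon) (F : mon -> mon -> K) : (forall i, g i <= B)%N ->
  \sum_(d : {ffun 'I_N -> 'I_B.+1} | mle (mv d) g) F (mv d) (msub g (mv d)) =
  \sum_(d : {ffun 'I_N -> 'I_B.+1} | mle (mv d) g) F (msub g (mv d)) (mv d).
Proof.
move=> hB.
pose r (d : {ffun 'I_N -> 'I_B.+1}) : {ffun 'I_N -> 'I_B.+1} := [ffun i => inord (g i - d i)].
have rv d : mv (r d) = msub g (mv d).
  apply/ffunP=> i; rewrite !ffunE inordK //; rewrite ltnS; apply: leq_trans (hB i).
  exact: leq_subr.
have ss d : mle (mv d) g -> msub g (msub g (mv d)) = mv d.
  move/mleP=> Hd; apply/ffunP=> i; move: (Hd i); rewrite !ffunE => Hi.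
  by rewrite subKn.
have pr d : (mle (mv (r d)) g && (r (r d) == d)) = mle (mv d) g.
  apply/idP/idP.
    case/andP=> _ /eqP E; rewrite -E rv rv; apply/mleP=> i; rewrite !ffunE.
    exact: leq_subr.
  move=> Pd; apply/andP; split.
    by rewrite rv; apply/mleP=> i; rewrite !ffunE leq_subr.
  by apply/eqP/mvinj; rewrite !rv ss.
rewrite (reindex_onto r r).
  apply: eq_big => [d|d]; first exact: pr.
  by rewrite pr => Pd; rewrite rv ss.
by move=> d Pd; apply: mvinj; rewrite !rv ss.
Qed.

Lemma amulC (f h : cser) g : amul f h g = amul h f g.
Proof.
rewrite !amulE (sum_flip (fun a b => f a * h b)); last exact: le_deg.
by apply: eq_bigr => d _; rewrite mulrC.
Qed.

Definition mulL (v : 'rV[K]_N) (f : cser) : cser := fun g =>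
  \sum_i v 0 i * (if (0 < g i)%N then f (msub g (mon_unit i)) else 0).

Lemma munitE (i j : 'I_N) : mon_unit i j = nat_of_bool (j == i).
Proof. by rewrite ffunE. Qed.

Lemma amul_alin (f : cser) v g : amul f (alin v) g = mulL v f g.
Proof.
rewrite amulE /alin /mulL /=.
under eq_bigr do rewrite mulr_sumr.
rewrite exchange_big /=; apply: eq_bigr => i _.
rewrite (bigID (fun d => msub g (mv d) == mon_unit i)) /=.
rewrite [X in _ + X]big1 ?addr0; last by move=> d /andP[_ /negbTE ->]; rewrite mulr0 mulr0.
under eq_bigr => d /andP[_ ->] do rewrite mulr1.
case: ifP => gi.
  pose d0 : {ffun 'I_N -> 'I_(\sum_j g j).+1} := [ffun j => inord (g j - (j == i))].
  have d0v : mv d0 = msub g (mon_unit i).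
    apply/ffunP=> j; rewrite !ffunE inordK // ltnS; apply: leq_trans (le_deg g j).
    exact: leq_subr.
  rewrite (big_pred1 d0); first by rewrite d0v mulrC.
  move=> d /=; apply/idP/idP.
    case/andP=> /mleP Hd /eqP E; apply/eqP/mvinj; rewrite d0v -E.
    apply/ffunP=> j; rewrite !ffunE; move: (Hd j); rewrite ffunE => Hj.
    by rewrite subKn.
  move/eqP->; rewrite d0v; apply/andP; split.
    by apply/mleP=> j; rewrite !ffunE leq_subr.
  apply/eqP/ffunP=> j; rewrite !ffunE subKn //.
  by case: eqP => [->|]; [rewrite gi|].
rewrite big_pred0 ?mulr0 // => d; apply/negbTE; apply/negP=> /andP[_ /eqP E].
move/ffunP: E => /(_ i); rewrite !ffunE eqxx.
by move: gi; rewrite lt0n => /negbFE/eqP ->.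
Qed.

Lemma amul_alinl (f : cser) v g : amul (alin v) f g = mulL v f g.
Proof. by rewrite amulC amul_alin. Qed.

Lemma mle_sub1 (d g : mon) i : (0 < g i)%N ->
  mle d (msub g (mon_unit i)) = mle d g && (d i < g i)%N.
Proof.
move=> gi; apply/idP/idP.
  move/mleP=> H; apply/andP; split.
    apply/mleP=> j; apply: leq_trans (H j) _; rewrite ffunE; exact: leq_subr.
  move: (H i); rewrite !ffunE eqxx /= => Hi.
  by apply: leq_ltn_trans Hi _; rewrite subn1 prednK.
case/andP=> /mleP H Hi; apply/mleP=> j; rewrite !ffunE.
case: eqP => [->|_]; last by rewrite subn0.
by rewrite subn1 -ltnS prednK.
Qed.

Lemma amul_mulL (h f : cser) v g : amul h (mulL v f) g = mulL v (amul h f) g.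
Proof.
rewrite /mulL amulE.
under [LHS]eq_bigr do rewrite mulr_sumr.
rewrite exchange_big /=; apply: eq_bigr => i _.
case: ifP => gi.
  have hb1 : forall j, (msub g (mon_unit i) j <= \sum_k msub g (mon_unit i) k)%N.
    by move=> j; apply: le_deg.
  have hb2 : forall j, (msub g (mon_unit i) j <= \sum_k g k)%N.
    by move=> j; rewrite ffunE; apply: leq_trans (leq_subr _ _) _; apply: le_deg.
  rewrite amulE (sum_bound (fun d => h d * f (msub (msub g (mon_unit i)) d)) hb1 hb2).
  rewrite mulr_sumr big_mkcond [RHS]big_mkcond /=; apply: eq_bigr => d _.
  rewrite mle_sub1 //; case: (mle _ _) => //=.
  rewrite ffunE [mv d i]ffunE subn_gt0; case: ifP => /= _; last by rewrite [v 0 i * 0]mulr0 [h _ * 0]mulr0.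
  rewrite mulrCA; congr (_ * (_ * f _)).
  by apply/ffunP=> j; rewrite !ffunE subnAC.
rewrite [v 0 i * 0]mulr0 big1 // => d _.
have -> : (0 < msub g (mv d) i)%N = false.
  by rewrite ffunE; move: gi; rewrite !lt0n => /negbFE/eqP ->; rewrite sub0n.
by rewrite [v 0 i * 0]mulr0 [h _ * 0]mulr0.
Qed.

Definition deg (g : mon) := (\sum_i g i)%N.
Local Notation madd1 g i := (mon_add g (mon_unit i)).
Local Notation msub1 g i := (msub g (mon_unit i)).
Definition dc (p : cser) i : cser := fun g => ((g i).+1)%:R * p (madd1 g i).
Definition sh i (f : cser) : cser := fun g => if (0 < g i)%N then f (msub1 g i) else 0.

Lemma madd1E g i j : madd1 g i j = (g j + (j == i))%N.
Proof. by rewrite !ffunE. Qed.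
Lemma msub1E g i j : msub1 g i j = (g j - (j == i))%N.
Proof. by rewrite !ffunE. Qed.

Lemma msub_madd g i : msub1 (madd1 g i) i = g.
Proof. by apply/ffunP=> j; rewrite msub1E madd1E addnK. Qed.

Lemma madd_msub g i : (0 < g i)%N -> madd1 (msub1 g i) i = g.
Proof.
move=> gi; apply/ffunP=> j; rewrite madd1E msub1E.
by case: eqP => [->|]; rewrite ?subn0 ?addn0 // subnK.
Qed.

Lemma madd_msub_ne g i j : i != j -> msub1 (madd1 g j) i = madd1 (msub1 g i) j.
Proof.
move=> ij; apply/ffunP=> k; rewrite msub1E madd1E madd1E msub1E.
case: (eqVneq k i) => [->|ki]; first by rewrite ?eqxx (negbTE ij) ?addn0.
by rewrite ?(negbTE ki) !subn0.
Qed.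

Lemma deg_madd g i : deg (madd1 g i) = (deg g).+1.
Proof.
rewrite /deg (bigD1 i) //= [in RHS](bigD1 i) //= madd1E eqxx addn1 addSn; congr _.+1.
by congr addn; apply: eq_bigr => j ji; rewrite madd1E (negbTE ji) addn0.
Qed.

Lemma deg_msub g i : (0 < g i)%N -> deg (msub1 g i) = (deg g).-1.
Proof. by move=> gi; rewrite -{2}(madd_msub gi) deg_madd. Qed.

Lemma deg0 g : deg g = 0%N -> g = mon0 N.
Proof.
move=> /eqP; rewrite /deg sum_nat_eq0 => /forallP H; apply/ffunP=> i; rewrite ffunE.
by apply/eqP; exact: (implyP (H i)).
Qed.

Lemma madd1_neq0 g i : (madd1 g i == mon0 N) = false.
Proof.
apply/negbTE/negP=> /eqP/ffunP/(_ i); rewrite madd1E !ffunE eqxx addn1 //.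
Qed.

Lemma mulL_sh v f g : mulL v f g = \sum_i v 0 i * sh i f g.
Proof. by []. Qed.

Lemma mulL0 v f : mulL v f (mon0 N) = 0.
Proof. by apply: big1 => i _; rewrite ffunE /= mulr0. Qed.

Lemma dc_mulL v f j g : dc (mulL v f) j g = v 0 j * f g + mulL v (dc f j) g.
Proof.
rewrite /dc /mulL mulr_sumr (bigD1 j) //= [in RHS](bigD1 j) //= addrA.
congr (_ + _).
  rewrite madd1E eqxx addn1 /= msub_madd /dc msub1E eqxx.
  case: (posnP (g j)) => [->|gj]; first by rewrite mulr0 addr0 mul1r.
  rewrite (madd_msub gj) subn1 prednK // mulrCA -mulrDr; congr (_ * _).
  by rewrite -natr1 mulrDl mul1r addrC.
apply: eq_bigr => i ij; rewrite madd1E (negbTE ij) addn0.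
rewrite mulrCA; congr (_ * _); case: ifP => gi; last by rewrite mulr0.
by rewrite /dc msub1E eq_sym (negbTE ij) subn0 madd_msub_ne.
Qed.

Lemma dc_sum (I : finType) (F : I -> cser) j g :
  dc (fun g => \sum_r F r g) j g = \sum_r dc (F r) j g.
Proof. by rewrite /dc mulr_sumr. Qed.

Lemma amul_suml (I : finType) (F : I -> cser) h g :
  amul (fun g => \sum_r F r g) h g = \sum_r amul (F r) h g.
Proof.
rewrite amulE /=; under eq_bigr do rewrite mulr_suml.
by rewrite exchange_big; apply: eq_bigr => r _; rewrite amulE.
Qed.

Lemma amul_sumr (I : finType) (F : I -> cser) h g :
  amul h (fun g => \sum_r F r g) g = \sum_r amul h (F r) g.
Proof.
rewrite amulC amul_suml; by apply: eq_bigr => r _; rewrite amulC.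
Qed.

Lemma amul_scalel c f h g : amul (fun g => c * f g) h g = c * amul f h g.
Proof.
rewrite !amulE mulr_sumr; by apply: eq_bigr => d _; rewrite mulrA.
Qed.

Lemma amul_addl f1 f2 h g : amul (fun g => f1 g + f2 g) h g = amul f1 h g + amul f2 h g.
Proof. rewrite !amulE -big_split; by apply: eq_bigr => d _; rewrite mulrDl. Qed.

Lemma amul_ext f1 f2 h1 h2 g : (forall x, f1 x = f2 x) -> (forall x, h1 x = h2 x) ->
  amul f1 h1 g = amul f2 h2 g.
Proof.
move=> E1 E2; rewrite (functional_extensionality _ _ E1).
by rewrite (functional_extensionality _ _ E2).
Qed.

Lemma amul0r h g : amul (fun _ => 0) h g = 0.
Proof. by rewrite amulE big1 // => d _; rewrite mul0r. Qed.

Lemma amul_const f c g : amul f (fun x => if x == mon0 N then c else 0) g = c * f g.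
Proof.
rewrite amulE (bigID (fun d => msub g (mv d) == mon0 N)) /=.
rewrite [X in _ + X]big1 ?addr0; last by move=> d /andP[_ /negbTE ->]; rewrite mulr0.
under eq_bigr => d /andP[_ ->] do rewrite mulrC.
pose d0 : {ffun 'I_N -> 'I_(\sum_j g j).+1} := [ffun j => inord (g j)].
have d0v : mv d0 = g by apply/ffunP=> j; rewrite !ffunE inordK // ltnS le_deg.
rewrite (big_pred1 d0); first by rewrite d0v.
move=> d /=; apply/idP/idP.
  case/andP=> /mleP Hd /eqP E; apply/eqP/mvinj; rewrite d0v.
  apply/ffunP=> j; move/ffunP: E => /(_ j); rewrite !ffunE => /eqP.
  rewrite subn_eq0 => H; apply/eqP; rewrite eqn_leq H andbT; by move: (Hd j); rewrite ffunE.
move/eqP->; rewrite d0v; apply/andP; split.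
  by apply/mleP=> j.
by apply/eqP/ffunP=> j; rewrite !ffunE subnn.
Qed.

Lemma amul_constl f c g : amul (fun x => if x == mon0 N then c else 0) f g = c * f g.
Proof. by rewrite amulC amul_const. Qed.

Lemma sh_sh i j f g : sh i (sh j f) g = sh j (sh i f) g.
Proof.
rewrite /sh; case: (eqVneq i j) => [->//|ij].
rewrite !msub1E (negbTE ij) eq_sym (negbTE ij) !subn0.
case: (g i) => [|gi]; case: (g j) => [|gj] //=.
by congr f; apply/ffunP=> k; rewrite !msub1E subnAC.
Qed.

Lemma sh_ext i f1 f2 g : (forall x, f1 x = f2 x) -> sh i f1 g = sh i f2 g.
Proof. by move=> E; rewrite /sh E. Qed.

Lemma mulL_ext v f1 f2 g : (forall x, f1 x = f2 x) -> mulL v f1 g = mulL v f2 g.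
Proof. by move=> E; rewrite (functional_extensionality _ _ E). Qed.

Lemma sh_mulL i w f g : sh i (mulL w f) g = \sum_j w 0 j * sh i (sh j f) g.
Proof.
rewrite /sh; case: ifP => _ //.
by rewrite big1 // => j _; rewrite mulr0.
Qed.

Lemma mulL_mulL v w f g : mulL v (mulL w f) g = mulL w (mulL v f) g.
Proof.
rewrite !mulL_sh.
under eq_bigr do rewrite sh_mulL mulr_sumr.
under [RHS]eq_bigr do rewrite sh_mulL mulr_sumr.
rewrite exchange_big; apply: eq_bigr => i _; apply: eq_bigr => j _.
by rewrite sh_sh mulrCA.
Qed.

Lemma euler q g : \sum_j sh j (dc q j) g = (deg g)%:R * q g.
Proof.
rewrite /deg natr_sum mulr_suml; apply: eq_bigr => j _.
rewrite /sh /dc; case: (posnP (g j)) => [->|gj]; first by rewrite mul0r.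
by rewrite msub1E eqxx subn1 prednK // madd_msub.
Qed.

Definition scl k p : cser := fun g => p g / ((deg g + k)%:R).

Lemma scl_mulL k v f g : scl k (mulL v f) g = mulL v (scl k.+1 f) g.
Proof.
rewrite /scl /mulL mulr_suml; apply: eq_bigr => i _; rewrite -mulrA; congr (_ * _).
rewrite /sh; case: ifP => gi; last by rewrite mul0r.
rewrite deg_msub // addnS -addSn prednK //.
by apply: leq_trans gi (le_deg g i).
Qed.

Definition Rd p : cser := fun g => if deg g == 0%N then 0 else p g / (deg g)%:R.

Lemma dc_Rd p j g : dc (Rd p) j g = scl 1 (dc p j) g.
Proof. by rewrite /dc /Rd /scl deg_madd addn1 /= mulrA. Qed.

Lemma mulL_sumf v (I : finType) (F : I -> cser) g :
  mulL v (fun x => \sum_r F r x) g = \sum_r mulL v (F r) g.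
Proof.
rewrite /mulL exchange_big; apply: eq_bigr => i _; rewrite -mulr_sumr; congr (_ * _).
by rewrite /sh; case: ifP => // _; rewrite big1.
Qed.

Lemma mulL_addf v f1 f2 g : mulL v (fun x => f1 x + f2 x) g = mulL v f1 g + mulL v f2 g.
Proof.
rewrite /mulL -big_split; apply: eq_bigr => i _ /=; rewrite -mulrDr; congr (_ * _).
by rewrite /sh; case: ifP => // _; rewrite addr0.
Qed.

Lemma mulL_scalef v c f g : mulL v (fun x => c * f x) g = c * mulL v f g.
Proof.
rewrite /mulL mulr_sumr; apply: eq_bigr => i _; rewrite mulrCA; congr (_ * _).
by rewrite /sh; case: ifP => // _; rewrite mulr0.
Qed.

Lemma mulL_zero v g : mulL v (fun _ => 0) g = 0.
Proof. by rewrite /mulL big1 // => i _; rewrite /sh; case: ifP; rewrite mulr0. Qed.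

Lemma munit_madd i : mon_unit i = madd1 (mon0 N) i.
Proof. by apply/ffunP=> j; rewrite madd1E !ffunE. Qed.

Lemma deg_mon0 : deg (mon0 N) = 0%N.
Proof. by rewrite /deg big1 // => i _; rewrite ffunE. Qed.

Lemma alin_mulL v g : alin v g = mulL v (fun x => if x == mon0 N then 1 else 0) g.
Proof.
rewrite /alin /mulL; apply: eq_bigr => i _; congr (_ * _); rewrite /sh.
case: (eqVneq g (mon_unit i)) => [->|gn].
  rewrite munit_madd madd1E eqxx ffunE /=.
  have -> : msub (madd1 (mon0 N) i) (madd1 (mon0 N) i) == mon0 N.
    by apply/eqP/ffunP=> j; rewrite !ffunE subnn.
  by [].
case: ifP => gi //; case: eqP => // E; exfalso; move/eqP: gn; apply.
by rewrite -[g](madd_msub gi) E -munit_madd.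
Qed.

Lemma dc_alin v j g : dc (alin v) j g = if g == mon0 N then v 0 j else 0.
Proof.
rewrite /dc /alin; case: eqP => [->|gn].
  rewrite ffunE mul1r (bigD1 j) //= big1 ?addr0; first by rewrite -munit_madd eqxx mulr1.
  move=> i ij; rewrite -munit_madd.
  case: eqP => [/ffunP/(_ j)|]; last by rewrite mulr0.
  by rewrite !ffunE eqxx eq_sym (negbTE ij).
rewrite big1 ?mulr0 // => i _.
case: eqP => [E|]; last by rewrite mulr0.
move/(congr1 deg): E; rewrite deg_madd munit_madd deg_madd deg_mon0 => [[/deg0]].
by move=> E; case: gn.
Qed.

Lemma dc_ext p q i g : (forall x, p x = q x) -> dc p i g = dc q i g.
Proof. by move=> E; rewrite /dc E. Qed.

Section Ax.
Variables (m : nat) (X : 'M[K]_(m, N)).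

Definition inAx p := exists f : 'I_m -> cser, forall g, p g = \sum_r mulL (row r X) (f r) g.

Lemma inAx_in_Ax p : in_Ax X p <-> inAx p.
Proof.
split=> [[f ->]|[f Hf]]; exists f.
  by move=> g; apply: eq_bigr => r _; rewrite amul_alin.
apply: functional_extensionality => g; rewrite Hf.
by apply: eq_bigr => r _; rewrite amul_alin.
Qed.

Lemma inAx_ext p q : (forall g, p g = q g) -> inAx p -> inAx q.
Proof. by move=> E [f Hf]; exists f => g; rewrite -E Hf. Qed.

Lemma inAx0 : inAx (fun _ => 0).
Proof.
exists (fun _ _ => 0) => g; rewrite big1 // => r _; exact: mulL_zero.
Qed.

Lemma inAx_add p q : inAx p -> inAx q -> inAx (fun g => p g + q g).
Proof.
move=> [f Hf] [h Hh]; exists (fun r x => f r x + h r x) => g.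
by rewrite Hf Hh -big_split; apply: eq_bigr => r _; rewrite mulL_addf.
Qed.

Lemma inAx_scale c p : inAx p -> inAx (fun g => c * p g).
Proof.
move=> [f Hf]; exists (fun r x => c * f r x) => g.
by rewrite Hf mulr_sumr; apply: eq_bigr => r _; rewrite mulL_scalef.
Qed.

Lemma inAx_opp p : inAx p -> inAx (fun g => - p g).
Proof.
move=> H; apply: inAx_ext (inAx_scale (-1) H) => g; by rewrite mulN1r.
Qed.

Lemma inAx_sub p q : inAx p -> inAx q -> inAx (fun g => p g - q g).
Proof. by move=> Hp Hq; apply: inAx_add Hp (inAx_opp Hq). Qed.

Lemma inAx_sum (I : finType) (F : I -> cser) :
  (forall x, inAx (F x)) -> inAx (fun g => \sum_x F x g).
Proof.
move=> H.
suff: forall s : seq I, inAx (fun g => \sum_(x <- s) F x g) by apply.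
elim=> [|a s IH].
  by apply: inAx_ext inAx0 => g; rewrite big_nil.
apply: inAx_ext (inAx_add (H a) IH) => g; by rewrite big_cons.
Qed.

Lemma inAx_mon0 p : inAx p -> p (mon0 N) = 0.
Proof. by move=> [f ->]; rewrite big1 // => r _; rewrite mulL0. Qed.

Lemma inAx_row t h : inAx (mulL (row t X) h).
Proof.
exists (fun r x => if r == t then h x else 0) => g.
rewrite (bigD1 t) //= big1 ?addr0; first by apply: mulL_ext => x; rewrite eqxx.
move=> r rt; rewrite (mulL_ext _ (f2 := fun _ => 0)) ?mulL_zero // => x.
by rewrite (negbTE rt).
Qed.

Lemma inAx_amul h p : inAx p -> inAx (fun g => amul h p g).
Proof.
move=> [f Hf]; exists (fun r => amul h (f r)) => g.
rewrite (amul_ext (f2 := h) (h2 := fun g => \sum_r mulL (row r X) (f r) g)) //.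
by rewrite amul_sumr; apply: eq_bigr => r _; rewrite amul_mulL.
Qed.

Lemma inAx_amulr h p : inAx p -> inAx (fun g => amul p h g).
Proof.
move=> H; apply: inAx_ext (inAx_amul h H) => g; exact: amulC.
Qed.

Lemma inAx_mulL v p : inAx p -> inAx (mulL v p).
Proof.
move=> [f Hf]; exists (fun r => mulL v (f r)) => g.
rewrite (mulL_ext _ (f2 := fun g => \sum_r mulL (row r X) (f r) g)) //.
by rewrite mulL_sumf; apply: eq_bigr => r _; rewrite mulL_mulL.
Qed.

Lemma inAx_scl k p : inAx p -> inAx (scl k p).
Proof.
move=> [f Hf]; exists (fun r => scl k.+1 (f r)) => g.
rewrite /scl Hf mulr_suml; apply: eq_bigr => r _.
by rewrite -scl_mulL.
Qed.

Lemma dc_Ax (f : 'I_m -> cser) i g :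
  dc (fun g => \sum_r mulL (row r X) (f r) g) i g =
  \sum_r X r i * f r g + \sum_r mulL (row r X) (dc (f r) i) g.
Proof.
rewrite dc_sum -big_split; apply: eq_bigr => r _.
by rewrite dc_mulL mxE.
Qed.

Lemma bracket_Ax (W : 'M[K]_N) (P Q : 'I_N -> cser) (G F : 'I_m -> cser) :
  X *m W *m X^T = 0 ->
  (forall i, inAx (fun g => P i g - \sum_s X s i * G s g)) ->
  (forall j, inAx (fun g => Q j g - \sum_r X r j * F r g)) ->
  inAx (fun g => \sum_i \sum_j W i j * amul (P i) (Q j) g).
Proof.
move=> XW HP HQ.
set A := fun i g => P i g - \sum_s X s i * G s g.
set B := fun j g => Q j g - \sum_r X r j * F r g.
set LG := fun i g => \sum_s X s i * G s g.
set LF := fun j g => \sum_r X r j * F r g.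
have E i j g : amul (P i) (Q j) g = (amul (A i) (Q j) g + amul (LG i) (B j) g) +
    \sum_s \sum_r X s i * X r j * amul (G s) (F r) g.
  rewrite (amul_ext (f2 := fun g => A i g + LG i g) (h2 := Q j)); first last.
  - by [].
  - by move=> x; rewrite /A /LG subrK.
  rewrite amul_addl -addrA; congr (_ + _).
  rewrite (amul_ext (f2 := LG i) (h2 := fun g => B j g + LF j g)); first last.
  - by move=> x; rewrite /B /LF subrK.
  - by [].
  rewrite amulC amul_addl [amul (B j) _ _]amulC [amul (LF j) _ _]amulC; congr (_ + _).
  rewrite /LG amul_suml; apply: eq_bigr => s _.
  rewrite amul_scalel /LF amul_sumr mulr_sumr; apply: eq_bigr => r _.
  by rewrite amulC amul_scalel amulC mulrA.
apply: (@inAx_ext (fun g => \sum_i \sum_j W i j * (amul (A i) (Q j) g + amul (LG i) (B j) g))).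
  move=> g.
  under [RHS]eq_bigr do under eq_bigr do rewrite E mulrDr.
  under [RHS]eq_bigr do rewrite big_split /=.
  rewrite big_split /= quad_sum XW.
  by rewrite [X in _ + X]big1 ?addr0 // => s _; rewrite big1 // => r _; rewrite mxE mul0r.
apply: inAx_sum => i; apply: inAx_sum => j; apply: inAx_scale; apply: inAx_add.
  by apply: inAx_ext (inAx_amulr (Q j) (HP i)).
by apply: inAx_ext (inAx_amul (LG i) (HQ j)).
Qed.

Lemma sh_sumscale i (c : 'I_N -> K) (H : 'I_N -> cser) g :
  sh i (fun x => \sum_j c j * H j x) g = \sum_j c j * sh i (H j) g.
Proof. by rewrite /sh; case: ifP => // _; rewrite big1 // => j _; rewrite mulr0. Qed.

Lemma sum3_swap (R : nmodType) (A B C : finType) (T : A -> B -> C -> R) :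
  \sum_a \sum_b \sum_c T a b c = \sum_c \sum_a \sum_b T a b c.
Proof.
transitivity (\sum_a \sum_c \sum_b T a b c).
  by apply: eq_bigr => a _; rewrite exchange_big.
by rewrite exchange_big.
Qed.

Lemma mulL_expand (Y : 'M[K]_(m, N)) (C : 'M[K]_(m, N)) s q g :
  mulL (row s Y) (fun x => \sum_j C s j * dc q j x) g =
  \sum_k \sum_j Y s k * C s j * sh k (dc q j) g.
Proof.
rewrite mulL_sh; apply: eq_bigr => k _; rewrite sh_sumscale mulr_sumr mxE.
by apply: eq_bigr => j _; rewrite mulrA.
Qed.

Lemma euler_Ax (U Wt Lm : 'M[K]_(m, N)) p :
  [pchar K] =i pred0 ->
  X^T *m Wt + Lm^T *m U = 1%:M ->
  (forall r, inAx (fun g => \sum_j U r j * dc p j g)) ->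
  p (mon0 N) = 0 ->
  inAx p.
Proof.
move=> ch0 Hid HU p0.
have nz k : ((k%:R : K) == 0) = (k == 0)%N by move/pcharf0P: ch0 => ->.
set q := Rd p.
have Eu g : p g = \sum_j sh j (dc q j) g.
  rewrite euler /q /Rd; case: eqP => [/deg0 ->|dg]; first by rewrite p0 mulr0.
  by rewrite mulrCA mulfV ?mulr1 // nz; apply/eqP.
apply: (@inAx_ext (fun g => \sum_s mulL (row s X) (fun x => \sum_j Wt s j * dc q j x) g +
                        \sum_r mulL (row r Lm) (fun x => \sum_j U r j * dc q j x) g)).
  move=> g; rewrite Eu.
  under eq_bigr do rewrite mulL_expand.
  under [in X in _ + X]eq_bigr do rewrite mulL_expand.
  rewrite -[Z in Z + _]sum3_swap -[Z in _ + Z]sum3_swap -big_split /=.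
  transitivity (\sum_k \sum_j (1%:M : 'M[K]_N) k j * sh k (dc q j) g).
    rewrite -Hid; apply: eq_bigr => k _; rewrite -big_split /=; apply: eq_bigr => j _.
    rewrite !mxE mulrDl !mulr_suml; congr (_ + _); apply: eq_bigr => s _; by rewrite !mxE.
  apply: eq_bigr => k _; rewrite (bigD1 k) //= big1 ?addr0; first by rewrite mxE eqxx mul1r.
  by move=> j jk; rewrite mxE eq_sym (negbTE jk) mul0r.
apply: inAx_add.
  exists (fun s x => \sum_j Wt s j * dc q j x) => g //.
apply: inAx_sum => r; apply: inAx_mulL.
apply: inAx_ext (inAx_scl 1 (HU r)) => g.
rewrite /scl mulr_suml; apply: eq_bigr => j _.
by rewrite /q dc_Rd /scl mulrA.
Qed.

Lemma dc_Ax_shape p (f : 'I_m -> cser) i :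
  (forall g, p g = \sum_r mulL (row r X) (f r) g) ->
  inAx (fun g => dc p i g - \sum_s X s i * f s g).
Proof.
move=> Hp; exists (fun r => dc (f r) i) => g.
by rewrite (dc_ext _ _ Hp) dc_Ax addrC addKr.
Qed.

End Ax.

Section Star.
Variable W : 'M[K]_N.

Lemma sum_tuple0 (T : finType) (F : 0.-tuple T -> K) : \sum_t F t = F [tuple].
Proof. by rewrite (big_pred1 [tuple]) // => t; rewrite [t]tuple0 /= eq_refl. Qed.

Lemma sum_tuple1 (T : finType) (F : 1.-tuple T -> K) : \sum_t F t = \sum_x F [tuple x].
Proof.
rewrite (reindex (fun x => [tuple x])) //; exists (@thead 0 T) => [x|t] _ //.
by case: t => [[|a [|b s]] //= H]; apply: val_inj.
Qed.

Lemma cprod1 (a b : ser K N) g : cprod a b 1 g = amul (a 0%N) (b 1%N) g + amul (a 1%N) (b 0%N) g.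
Proof. by rewrite /cprod big_ord_recr /= big_ord1. Qed.

Lemma star0 (a b : ser K N) g : star W a b 0 g = amul (a 0%N) (b 0%N) g.
Proof.
rewrite /star big_ord1 /= sum_tuple0 sum_tuple0 big_ord0 mul1r expn0 fact0 invr1 mul1r.
by rewrite /cprod big_ord1.
Qed.

Lemma star1 (a b : ser K N) g : star W a b 1 g = cprod a b 1 g +
  2%:R^-1 * \sum_i \sum_j W i j * amul (dc (a 0%N) i) (dc (b 0%N) j) g.
Proof.
rewrite /star big_ord_recr /= big_ord1 /= sum_tuple0 sum_tuple0 big_ord0 mul1r expn0 fact0 invr1 mul1r.
congr (_ + _ * _).
rewrite sum_tuple1; apply: eq_bigr => i _; rewrite sum_tuple1; apply: eq_bigr => j _.
by rewrite big_ord1 /cprod big_ord1.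
Qed.

Lemma dsers_hbar0 (I : seq 'I_N) k g : g != mon0 N -> dsers (@hbar K N) I k g = 0.
Proof.
elim: I k g => [|i I IH] k g gn /=.
  by rewrite /hbar (negbTE gn) andbF.
by rewrite /dser IH ?mulr0 // madd1_neq0.
Qed.

Lemma dsers_hbar (I : seq 'I_N) k g : I != [::] -> dsers (@hbar K N) I k g = 0.
Proof.
case: I => [//|i I] _ /=; by rewrite /dser dsers_hbar0 ?mulr0 // madd1_neq0.
Qed.

Lemma cprod0l (f h : ser K N) k g : (forall k g, f k g = 0) -> cprod f h k g = 0.
Proof.
move=> H; rewrite /cprod big1 // => k1 _; rewrite big1 // => d _; by rewrite H mul0r.
Qed.

Lemma star_hbar (d : ser K N) k g :
  star W (@hbar K N) d k g = if k is k'.+1 then d k' g else 0.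
Proof.
rewrite /star big_ord_recl /= sum_tuple0 sum_tuple0 big_ord0 mul1r expn0 fact0 invr1 mul1r.
rewrite big1 ?addr0; last first.
  move=> i _; rewrite big1 ?mulr0 // => I _; rewrite big1 // => J _.
  rewrite cprod0l ?mulr0 // => k1 g1; apply: dsers_hbar.
  by case: I => [[|x s] //].
rewrite subn0; case: k => [|k].
  rewrite /cprod big_ord1 big1 // => dd _; by rewrite /hbar /= mul0r.
rewrite /cprod (bigD1 (Ordinal (isT : (1 < k.+2)%N))) //= [Z in _ + Z]big1 ?addr0; last first.
  move=> [k1 Hk] /= H; rewrite big1 // => dd _; rewrite /hbar.
  case: eqP => [E|]; last by rewrite mul0r.
  by move: H; rewrite /eq_op /= E.
transitivity (amul (fun x => if x == mon0 N then 1 else 0) (d k) g).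
  by rewrite /amul; apply: eq_bigr => dd _; rewrite /hbar /= subn1.
by rewrite amul_constl mul1r.
Qed.

End Star.

End Ser.

Lemma decomp (K : fieldType) (n : nat) (W : 'M[K]_(n.*2)) (X : 'M[K]_(n, n.*2)) :
  \det W != 0 -> \rank X = n -> X *m W *m X^T = 0 ->
  exists Wt Lm : 'M[K]_(n, n.*2), X^T *m Wt + Lm^T *m (X *m W^T) = 1%:M.
Proof.
move=> dW rX XW.
have fX : row_free X by rewrite /row_free rX.
case/row_freeP: fX => B XB.
set Q := 1%:M - X^T *m B^T.
have QK : (Q <= kermx X^T)%MS.
  apply/sub_kermxP; rewrite /Q mulmxBl mul1mx -mulmxA -trmx_mul XB trmx1 mulmx1.
  by rewrite subrr.
have UK : (X *m W^T <= kermx X^T)%MS.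
  apply/sub_kermxP.
  by rewrite -[X in X *m _ *m _]trmxK -!trmx_mul mulmxA XW trmx0.
have rU : \rank (X *m W^T) = n.
  rewrite mxrankMfree ?rX // row_free_unit unitmx_tr unitmxE unitfE //.
have rK : \rank (kermx X^T) = n.
  by rewrite mxrank_ker mxrank_tr rX -addnn addnK.
have KU : (kermx X^T <= X *m W^T)%MS.
  by move: (mxrank_leqif_sup UK) => [_ <-]; rewrite rU rK.
case/submxP: (submx_trans QK KU) => D QD.
exists B^T, D^T; rewrite trmxK -QD /Q.
by rewrite addrC subrK.
Qed.

Unset Implicit Arguments.

Theorem lemma3p1 (K : fieldType) (n : nat) (W : 'M[K]_(n.*2)) (X : 'M[K]_(n, n.*2)) :
  [pchar K] =i pred0 ->
  W^T = - W -> \det W != 0 ->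
  \rank X = n -> X *m W *m X^T = 0 ->
  (forall a b : ser K n.*2, inJ X a -> inJ X b -> G_rel a b -> a = b) /\
  (forall a : ser K n.*2, in_GJ W X a <-> exists b, inJ X b /\ G_rel a b).
Proof.
move=> ch0 WT dW rX XW.
have nz k : ((k%:R : K) == 0) = (k == 0)%N by move/pcharf0P: ch0 => ->.
have cstm (c : K) k g i : cst c k (mon_add g (mon_unit i)) = 0.
  by rewrite /cst madd1_neq0 andbF.
split.
  move=> a b /inAx_in_Ax Ha /inAx_in_Ax Hb [c Ec].
  have a0 : a 0%N (mon0 _) = 0 := inAx_mon0 Ha.
  have b0 : b 0%N (mon0 _) = 0 := inAx_mon0 Hb.
  have c0 : c = 0.
    move: (congr1 (fun f => f 0%N (mon0 _)) Ec) => /=.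
    by rewrite a0 b0 /cst !eqxx add0r.
  subst c; rewrite Ec; apply: functional_extensionality => k.
  apply: functional_extensionality => g.
  by rewrite /cst; case: ifP; rewrite addr0.
move=> a; split; last first.
  case=> b [/inAx_in_Ax [fb Hb] [c Ec]] b' /inAx_in_Ax [fb' Hb'].
  have da i g : dc (a 0%N) i g = dc (b 0%N) i g by rewrite /dc Ec /= cstm addr0.
  exists (fun k g => sub_ser (star W a b') (star W b' a) k.+1 g); split.
    apply/inAx_in_Ax.
    apply: (@inAx_ext _ _ _ _ (fun g => 2%:R^-1 * (
       \sum_i \sum_j W i j * amul (dc (a 0%N) i) (dc (b' 0%N) j) g -
       \sum_i \sum_j W i j * amul (dc (b' 0%N) i) (dc (a 0%N) j) g))).
      move=> g; rewrite /proj /sub_ser /= !star1 !cprod1.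
      rewrite [amul (b' 0%N) (a 1%N) g]amulC [amul (b' 1%N) (a 0%N) g]amulC.
      ring.
    apply: inAx_scale; apply: inAx_sub; apply: bracket_Ax => // i.
    - apply: inAx_ext (dc_Ax_shape i Hb) => g; by rewrite da.
    - exact: dc_Ax_shape i Hb'.
    - exact: dc_Ax_shape i Hb'.
    - apply: inAx_ext (dc_Ax_shape i Hb) => g; by rewrite da.
  apply: functional_extensionality => k; apply: functional_extensionality => g.
  rewrite star_hbar; case: k => [|k] //.
  by rewrite /sub_ser !star0 amulC subrr.
move=> Ha.
set c := a 0%N (mon0 _).
exists (fun k g => a k g - cst c k g); split; last first.
  exists c; apply: functional_extensionality => k; apply: functional_extensionality => g.
  by rewrite subrK.
apply/inAx_in_Ax.
have [Wt [Lm Hid]] := decomp dW rX XW.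
apply: (euler_Ax (U := X *m W^T) (Wt := Wt) (Lm := Lm)) => //; last first.
  by rewrite /proj /= /cst !eqxx /= subrr.
move=> r.
pose lin : ser K n.*2 := fun k g => if k == 0%N then alin (row r X) g else 0.
have Hl : inJ X lin.
  apply/inAx_in_Ax; apply: inAx_ext (inAx_row X r (fun x => if x == mon0 _ then 1 else 0)) => g.
  by rewrite /proj /lin /= alin_mulL.
case: (Ha lin Hl) => d [/inAx_in_Ax Hd Hs].
apply: inAx_ext Hd => g.
have E : d 0%N g = sub_ser (star W a lin) (star W lin a) 1 g by rewrite -Hs star_hbar.
rewrite /proj E /sub_ser !star1 !cprod1.
have L1 : amul (a 0%N) (lin 1%N) g = 0.
  by rewrite amulC (amul_ext (f2 := fun _ => 0) (h2 := a 0%N)) // amul0r.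
have L2 : amul (lin 1%N) (a 0%N) g = 0.
  by rewrite (amul_ext (f2 := fun _ => 0) (h2 := a 0%N)) // amul0r.
have L4 i j : amul (dc (a 0%N) i) (dc (lin 0%N) j) g = X r j * dc (a 0%N) i g.
  rewrite (amul_ext (f2 := dc (a 0%N) i) (h2 := fun x => if x == mon0 _ then X r j else 0)) //.
    by rewrite amul_const.
  by move=> x; rewrite /lin /= dc_alin mxE.
have L5 i j : amul (dc (lin 0%N) i) (dc (a 0%N) j) g = X r i * dc (a 0%N) j g.
  rewrite (amul_ext (f2 := fun x => if x == mon0 _ then X r i else 0) (h2 := dc (a 0%N) j)) //.
    by rewrite amul_constl.
  by move=> x; rewrite /lin /= dc_alin mxE.
rewrite L1 L2 [amul (a 1%N) _ _]amulC.
have E4 : \sum_i \sum_j W i j * amul (dc (a 0%N) i) (dc (lin 0%N) j) g =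
    \sum_i \sum_j W i j * (X r j * dc (a 0%N) i g).
  by apply: eq_bigr => i _; apply: eq_bigr => j _; rewrite L4.
have E5 : \sum_i \sum_j W i j * amul (dc (lin 0%N) i) (dc (a 0%N) j) g =
    \sum_i \sum_j W i j * (X r i * dc (a 0%N) j g).
  by apply: eq_bigr => i _; apply: eq_bigr => j _; rewrite L5.
rewrite E4 E5.
have dp j : dc (fun g0 => a 0%N g0 - cst c 0%N g0) j g = dc (a 0%N) j g.
  by rewrite /dc cstm subr0.
under [RHS]eq_bigr do rewrite dp.
have S2 : \sum_i \sum_j W i j * (X r i * dc (a 0%N) j g) =
    - \sum_i \sum_j W i j * (X r j * dc (a 0%N) i g).
  rewrite exchange_big -sumrN; apply: eq_bigr => i _; rewrite -sumrN; apply: eq_bigr => j _.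
  have -> : W j i = - W i j by move: (congr1 (fun M : 'M[K]_(n.*2) => M i j) WT); rewrite !mxE.
  by rewrite mulNr.
rewrite S2.
have S : \sum_i \sum_j W i j * (X r j * dc (a 0%N) i g) = \sum_j (X *m W^T) r j * dc (a 0%N) j g.
  apply: eq_bigr => i _; rewrite mxE mulr_suml; apply: eq_bigr => j _.
  by rewrite mxE mulrCA mulrA.
rewrite S; set T := \sum_j _.
have h2 : (2%:R : K) != 0 by rewrite nz.
field.
by [].
Qed.
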